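(* For every uncountable compact line $L$, the compact line $K=L^\omega$ (the set of all sequences in $L$) endowed with the lexicographic order is not separably determined.
   Context: A compact line is a totally ordered set which is compact in its order topology; $L^\omega$ with the lexicographic order is a compact line. For a compact line $H$, $H^+$ is the set of right-isolated points of $H$ ($\max H$ or points with an immediate successor in $H$). $\mathrm{NBV}(K)$ is the space of right-continuous real maps of bounded variation on $K$, identified with $C(K)^*$ via $F_\mu(t)=\mu([\min K,t])$. $\lim_{i\in I}a_i=0$ means $\{i:|a_i|\ge\varepsilon\}$ is finite for each $\varepsilon>0$; $c_0(I)$ is the space of such families. $(F_i)_{i\in I}$ in $\mathrm{NBV}(K)$ is weak*-null if $\lim_{i\in I}\int f\,d\mu_i=0$ for all $f\in C(K)$, $\mu_i$ associated to $F_i$. $(F_i)$ is of type $c_0\ell_1$ over $Q\subseteq K$ if $F_i(t)=a_{i,t}+b_{i,t}$ ($i\in I$, $t\in Q$) with $\lim_{i\in I}a_{i,t}=0$ for each $t\in Q$ and $\sup_i\sum_{t\in Q}|b_{i,t}|<\infty$. A compact line $K$ is separably determined if for every weak*-null family $(F_i)_{i\in I}$ in $\mathrm{NBV}(K)$ and every $Q\subseteq K$: whenever $\{t\in Q\cap(H\setminus H^+):(F_i(t))_{i\in I}\notin c_0(I)\}$ is countable for every closed separable $H\subseteq K$, the family is of type $c_0\ell_1$ over $Q$. *)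

(* Defs.v *)
From Stdlib Require Import Reals List.
Import ListNotations.
Open Scope R_scope.

Section LinearOrders.
Variable T : Type.
Variable lt : T -> T -> Prop.

Definition strict_linear_order : Prop :=
  (forall x, ~ lt x x) /\
  (forall x y z, lt x y -> lt y z -> lt x z) /\
  (forall x y, lt x y \/ x = y \/ lt y x).

(** membership in the interval (lo, hi), where None means unbounded;
    these are the basic open sets of the order topology *)
Definition in_int (lo hi : option T) (x : T) : Prop :=
  match lo with None => True | Some a => lt a x end /\
  match hi with None => True | Some b => lt x b end.

Definition order_open (U : T -> Prop) : Prop :=
  forall x, U x -> exists lo hi, in_int lo hi x /\ forall y, in_int lo hi y -> U y.

Definition order_closed (H : T -> Prop) : Prop :=
  order_open (fun x => ~ H x).

Definition order_compact : Prop :=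
  forall (J : Type) (U : J -> T -> Prop),
    (forall j, order_open (U j)) -> (forall x, exists j, U j x) ->
    exists s : list J, forall x, exists j, In j s /\ U j x.

Definition compact_line : Prop := strict_linear_order /\ order_compact.

Definition countable_set (A : T -> Prop) : Prop :=
  exists g : T -> nat, forall x y, A x -> A y -> g x = g y -> x = y.

Definition separable_set (H : T -> Prop) : Prop :=
  exists D : T -> Prop, (forall x, D x -> H x) /\ countable_set D /\
    forall x, H x -> forall lo hi, in_int lo hi x -> exists d, D d /\ in_int lo hi d.

Definition right_isolated (H : T -> Prop) (t : T) : Prop :=
  H t /\ ((forall s, H s -> ~ lt t s) \/
          exists s, H s /\ lt t s /\ ~ exists u, H u /\ lt t u /\ lt u s).

Definition continuous_fun (f : T -> R) : Prop :=
  forall x eps, 0 < eps -> exists lo hi, in_int lo hi x /\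
    forall y, in_int lo hi y -> Rabs (f y - f x) < eps.

Fixpoint incr (l : list T) : Prop :=
  match l with
  | x :: ((y :: _) as r) => lt x y /\ incr r
  | _ => True
  end.

Fixpoint var_sum (F : T -> R) (l : list T) : R :=
  match l with
  | x :: ((y :: _) as r) => Rabs (F y - F x) + var_sum F r
  | _ => 0
  end.

Definition right_continuous (F : T -> R) : Prop :=
  forall t eps, 0 < eps ->
    (forall s, ~ lt t s) \/
    exists u, lt t u /\ forall s, lt t s -> lt s u -> Rabs (F s - F t) < eps.

Definition bounded_variation (F : T -> R) : Prop :=
  exists M, forall l, incr l -> var_sum F l <= M.

Definition NBV (F : T -> R) : Prop := right_continuous F /\ bounded_variation F.

Definition partition (l : list T) : Prop :=
  incr l /\ match l with
            | [] => False
            | x :: _ => (forall y, ~ lt y x) /\ (forall y, ~ lt (last l x) y)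
            end.

Fixpoint rs_tail (F f : T -> R) (l : list T) : R :=
  match l with
  | x :: ((y :: _) as r) => f y * (F y - F x) + rs_tail F f r
  | _ => 0
  end.

(** Stieltjes sum: f(t_0) mu_F({t_0}) + sum_k f(t_k) mu_F((t_{k-1}, t_k]) *)
Definition rs_sum (F f : T -> R) (l : list T) : R :=
  match l with
  | [] => 0
  | x :: _ => f x * F x + rs_tail F f l
  end.

(** [stieltjes F f v]: v = \int f d mu_F, where mu_F is the measure associated
    with F (F(t) = mu_F([min K, t])); computed as the limit of the Stieltjes
    sums along the net of partitions directed by refinement. *)
Definition stieltjes (F f : T -> R) (v : R) : Prop :=
  forall eps, 0 < eps -> exists p0, partition p0 /\
    forall p, partition p -> (forall x, In x p0 -> In x p) ->
      Rabs (rs_sum F f p - v) < eps.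

End LinearOrders.

(** lim_{i in I} a_i = 0 : {i : |a_i| >= eps} finite for each eps > 0 *)
Definition c0lim {I : Type} (a : I -> R) : Prop :=
  forall eps, 0 < eps -> exists s : list I, forall i, eps <= Rabs (a i) -> In i s.

Definition weak_star_null {T : Type} (lt : T -> T -> Prop) {I : Type}
    (F : I -> T -> R) : Prop :=
  forall f, continuous_fun T lt f ->
    exists v : I -> R, (forall i, stieltjes T lt (F i) f (v i)) /\ c0lim v.

Definition type_c0l1 {T I : Type} (F : I -> T -> R) (Q : T -> Prop) : Prop :=
  exists (a b : I -> T -> R),
    (forall i t, Q t -> F i t = a i t + b i t) /\
    (forall t, Q t -> c0lim (fun i => a i t)) /\
    exists M, forall i (l : list T), NoDup l -> (forall t, In t l -> Q t) ->
      fold_right Rplus 0 (map (fun t => Rabs (b i t)) l) <= M.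

Definition separably_determined (T : Type) (lt : T -> T -> Prop) : Prop :=
  forall (I : Type) (F : I -> T -> R),
    (forall i, NBV T lt (F i)) -> weak_star_null lt F ->
    forall Q : T -> Prop,
      (forall H : T -> Prop, order_closed T lt H -> separable_set T lt H ->
         countable_set T (fun t => Q t /\ H t /\ ~ right_isolated T lt H t /\
                                   ~ c0lim (fun i => F i t))) ->
      type_c0l1 F Q.

Definition lex {L : Type} (lt : L -> L -> Prop) (x y : nat -> L) : Prop :=
  exists n, (forall m, (m < n)%nat -> x m = y m) /\ lt (x n) (y n).

Definition uncountable (L : Type) : Prop :=
  ~ exists g : L -> nat, forall x y, g x = g y -> x = y.

(* Main.v *)
Require Import Defs.
From Stdlib Require Import Reals List.
From mathcomp Require boolp wochoice.
From Stdlib Require Import Reals List Classical ClassicalEpsilon FunctionalExtensionality Lia Lra Cantor.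
Require Import Defs.
Import ListNotations.
Local Open Scope nat_scope.

Section Gen.
Variables (T : Type) (lt : T -> T -> Prop).
Hypothesis slo : strict_linear_order T lt.

Lemma g_irr x : ~ lt x x. Proof. apply slo. Qed.
Lemma g_tr x y z : lt x y -> lt y z -> lt x z. Proof. apply slo. Qed.
Lemma g_tri x y : lt x y \/ x = y \/ lt y x. Proof. apply slo. Qed.
Lemma g_asym x y : lt x y -> ~ lt y x.
Proof. intros H1 H2. apply (g_irr x). eapply g_tr; eauto. Qed.
Lemma g_nlt x y : ~ lt x y -> ~ lt y x -> x = y.
Proof. intros H1 H2. destruct (g_tri x y) as [?|[?|?]]; tauto. Qed.
Lemma g_le_lt x y z : ~ lt y x -> lt y z -> lt x z.
Proof. intros H1 H2. destruct (g_tri x y) as [?|[->|?]]; [eapply g_tr; eauto| auto| tauto]. Qed.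
Lemma g_lt_le x y z : lt x y -> ~ lt z y -> lt x z.
Proof. intros H1 H2. destruct (g_tri y z) as [?|[<-|?]]; [eapply g_tr; eauto| auto| tauto]. Qed.
Lemma g_le_tr x y z : ~ lt y x -> ~ lt z y -> ~ lt z x.
Proof. intros H1 H2 H3. destruct (g_tri x y) as [?|[->|?]]; [|tauto|tauto].
  apply H2. eapply g_tr; eauto. Qed.

Lemma list_max (P : T -> Prop) (l : list T) : (exists x, In x l /\ P x) ->
  exists p, In p l /\ P p /\ forall y, In y l -> P y -> ~ lt p y.
Proof.
  induction l as [|a l IH]; intros [x [Hx Px]]; [destruct Hx|].
  destruct (classic (exists x, In x l /\ P x)) as [E|E].
  - destruct (IH E) as [p [Hp [Pp Mp]]].
    destruct (classic (P a /\ lt p a)) as [[Pa Lpa]|N].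
    + exists a; split; [left; auto|split; auto]. intros y [<-|Hy] Py; [apply g_irr|].
      intros Hay. apply (Mp y Hy Py). eapply g_tr; eauto.
    + exists p; split; [right; auto|split; auto]. intros y [<-|Hy] Py; [|auto]. tauto.
  - exists a. destruct Hx as [<-|Hx]; [|exfalso; apply E; eauto].
    split; [left; auto|split; auto]. intros y [<-|Hy] Py; [apply g_irr|]. exfalso; eauto.
Qed.

Lemma list_min (P : T -> Prop) (l : list T) : (exists x, In x l /\ P x) ->
  exists p, In p l /\ P p /\ forall y, In y l -> P y -> ~ lt y p.
Proof.
  induction l as [|a l IH]; intros [x [Hx Px]]; [destruct Hx|].
  destruct (classic (exists x, In x l /\ P x)) as [E|E].
  - destruct (IH E) as [p [Hp [Pp Mp]]].
    destruct (classic (P a /\ lt a p)) as [[Pa Lpa]|N].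
    + exists a; split; [left; auto|split; auto]. intros y [<-|Hy] Py; [apply g_irr|].
      intros Hay. apply (Mp y Hy Py). eapply g_tr; eauto.
    + exists p; split; [right; auto|split; auto]. intros y [<-|Hy] Py; [|auto]. tauto.
  - exists a. destruct Hx as [<-|Hx]; [|exfalso; apply E; eauto].
    split; [left; auto|split; auto]. intros y [<-|Hy] Py; [apply g_irr|]. exfalso; eauto.
Qed.

Definition ub (A : T -> Prop) c := forall x, A x -> ~ lt c x.
Definition is_lub (A : T -> Prop) c := ub A c /\ forall u, ub A u -> ~ lt u c.

Definition lefts {X Y : Type} (l : list (X + Y)) : list X :=
  flat_map (fun j => match j with inl s => [s] | inr _ => [] end) l.
Definition rights {X Y : Type} (l : list (X + Y)) : list Y :=
  flat_map (fun j => match j with inl _ => [] | inr s => [s] end) l.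
Lemma in_lefts {X Y : Type} (l : list (X + Y)) s : In s (lefts l) <-> In (inl s) l.
Proof. unfold lefts; rewrite in_flat_map; split.
  - intros [[a|a] [H1 H2]]; simpl in H2; [destruct H2 as [->|[]]; auto|destruct H2].
  - intros H; exists (inl s); simpl; auto. Qed.
Lemma in_rights {X Y : Type} (l : list (X + Y)) s : In s (rights l) <-> In (inr s) l.
Proof. unfold rights; rewrite in_flat_map; split.
  - intros [[a|a] [H1 H2]]; simpl in H2; [destruct H2|destruct H2 as [->|[]]; auto].
  - intros H; exists (inr s); simpl; auto. Qed.

Lemma open_int lo hi : order_open T lt (in_int T lt lo hi).
Proof. intros x Hx. exists lo, hi. auto. Qed.

Lemma compact_lub (t0 : T) : order_compact T lt -> forall A, exists c, is_lub A c.
Proof.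
  intros Hc A. apply NNPP; intros Hno.
  set (U := fun (j : T + T) x => match j with
             | inl s => A s /\ lt x s | inr u => ub A u /\ lt u x end).
  destruct (Hc (T + T)%type U) as [js Hjs].
  - intros [s|u] x Hx; simpl in Hx.
    + exists None, (Some s). split; [split; simpl; tauto|]. intros y [_ Hy]; simpl; tauto.
    + exists (Some u), None. split; [split; simpl; tauto|]. intros y [Hy _]; simpl; tauto.
  - intros x. destruct (classic (exists s, A s /\ lt x s)) as [[s Hs]|N].
    + exists (inl s); exact Hs.
    + assert (Hub : ub A x) by (intros s As Hs; apply N; eauto).
      destruct (classic (exists u, ub A u /\ lt u x)) as [[u Hu]|N2].
      * exists (inr u); exact Hu.
      * exfalso; apply Hno; exists x; split; auto. intros u Hu Hux; apply N2; eauto.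
  - destruct (classic (exists x, In x (lefts js) /\ A x)) as [E|E].
    + destruct (list_max A _ E) as [p [Hp [Ap Mp]]].
      destruct (Hjs p) as [[s|u] [Hin Hu]]; simpl in Hu.
      * apply (Mp s); [apply in_lefts; auto| tauto| tauto].
      * destruct Hu as [Hu1 Hu2]. apply (Hu1 p Ap Hu2).
    + destruct (classic (exists x, In x (rights js) /\ ub A x)) as [E2|E2].
      * destruct (list_min (ub A) _ E2) as [p [Hp [Ap Mp]]].
        destruct (Hjs p) as [[s|u] [Hin Hu]]; simpl in Hu.
        -- apply E; exists s; split; [apply in_lefts; auto|tauto].
        -- apply (Mp u); [apply in_rights; auto| tauto| tauto].
      * destruct (Hjs t0) as [[s|u] [Hin Hu]]; simpl in Hu.
        -- apply E; exists s; split; [apply in_lefts; auto|tauto].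
        -- apply E2; exists u; split; [apply in_rights; auto|tauto].
Qed.

Lemma lub_compact : (forall A, exists c, is_lub A c) -> order_compact T lt.
Proof.
  intros Hl J U HUo HUc.
  set (S := fun x => exists js : list J, forall y, ~ lt x y -> exists j, In j js /\ U j y).
  destruct (Hl S) as [c [Hub Hleast]].
  destruct (HUc c) as [j Hj]. destruct (HUo j c Hj) as [lo [hi [Hin Hsub]]].
  assert (Hbelow : exists js, forall y, match hi with None => True | Some h => lt y h end ->
                      exists j', In j' js /\ U j' y).
  { destruct lo as [l|].
    - assert (Hlc : lt l c) by (destruct Hin as [H _]; exact H).
      assert (Hx : exists x, S x /\ lt l x).
      { apply NNPP; intros N. apply (Hleast l); [|exact Hlc].
        intros x Sx Hlx. apply N; eauto. }
      destruct Hx as [x [[js Hjs] Hlx]].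
      exists (j :: js). intros y Hy.
      destruct (classic (lt x y)) as [Hxy|Hxy].
      + exists j; split; [left; auto|]. apply Hsub. split; simpl; [eapply g_tr; eauto|exact Hy].
      + destruct (Hjs y Hxy) as [j' [H1 H2]]. exists j'; split; [right; auto|auto].
    - exists [j]. intros y Hy. exists j; split; [left; auto|]. apply Hsub. split; simpl; auto. }
  destruct Hbelow as [js Hjs].
  destruct hi as [h|].
  - exfalso. destruct (HUc h) as [j' Hj'].
    assert (Sh : S h).
    { exists (j' :: js). intros y Hy. destruct (g_tri y h) as [Hyh|[->|Hyh]].
      - destruct (Hjs y Hyh) as [j'' [? ?]]. exists j''; split; [right|]; auto.
      - exists j'; split; [left|]; auto.
      - tauto. }
    apply (Hub h Sh). destruct Hin as [_ Hch]. exact Hch.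
  - exists js. intros x. apply Hjs. exact I.
Qed.

Lemma closed_min : order_compact T lt -> forall C, order_closed T lt C -> (exists x, C x) ->
  exists p, C p /\ forall y, C y -> ~ lt y p.
Proof.
  intros Hc C HC [x0 Cx0]. apply NNPP; intros Hno.
  set (U := fun (j : option T) x => match j with
             | Some h => C h /\ lt h x | None => ~ C x end).
  destruct (Hc (option T) U) as [js Hjs].
  - intros [h|] x Hx; simpl in Hx.
    + exists (Some h), None. split; [split; simpl; tauto|]. intros y [Hy _]; simpl; tauto.
    + destruct (HC x Hx) as [lo [hi [H1 H2]]]. exists lo, hi; split; auto.
  - intros x. destruct (classic (C x)) as [Cx|Cx].
    + assert (exists y, C y /\ lt y x) as [y Hy].
      { apply NNPP; intros N. apply Hno. exists x; split; auto. intros y Cy Hy; apply N; eauto. }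
      exists (Some y); exact Hy.
    + exists None; exact Cx.
  - set (hs := flat_map (fun j => match j with Some h => [h] | None => [] end) js).
    assert (Hhs : forall h, In h hs <-> In (Some h) js).
    { intros h; unfold hs; rewrite in_flat_map; split.
      - intros [[a|] [H1 H2]]; simpl in H2; [destruct H2 as [->|[]]; auto|destruct H2].
      - intros H; exists (Some h); simpl; auto. }
    destruct (classic (exists h, In h hs /\ C h)) as [E|E].
    + destruct (list_min C _ E) as [p [Hp [Cp Mp]]].
      destruct (Hjs p) as [[h|] [Hin Hu]]; simpl in Hu; [|tauto].
      apply (Mp h); [apply Hhs; auto|tauto|tauto].
    + destruct (Hjs x0) as [[h|] [Hin Hu]]; simpl in Hu; [|tauto].
      apply E; exists h; split; [apply Hhs; auto|tauto].
Qed.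

End Gen.

Definition ctbl {X : Type} (A : X -> Prop) := exists f : nat -> X, forall x, A x -> exists k, f k = x.

Lemma fchoice {I X : Type} (P : I -> X -> Prop) : (forall i, exists x, P i x) -> exists g, forall i, P i (g i).
Proof. intros H. exists (fun i => proj1_sig (constructive_indefinite_description _ (H i))).
  intros i. exact (proj2_sig (constructive_indefinite_description _ (H i))). Qed.

Lemma ctbl_sub {X} (A B : X -> Prop) : (forall x, B x -> A x) -> ctbl A -> ctbl B.
Proof. intros H [f Hf]. exists f. intros x Bx. apply Hf, H, Bx. Qed.

Lemma ctbl_img {X Y} (A : X -> Prop) (g : X -> Y) : ctbl A -> ctbl (fun y => exists x, A x /\ y = g x).
Proof. intros [f Hf]. exists (fun k => g (f k)). intros y [x [Ax ->]]. destruct (Hf x Ax) as [k Hk].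
  exists k; congruence. Qed.

Lemma ctbl_union {I X} (P : I -> Prop) (A : I -> X -> Prop) (x0 : X) :
  ctbl P -> (forall i, P i -> ctbl (A i)) -> ctbl (fun x => exists i, P i /\ A i x).
Proof.
  intros [fP HfP] HA.
  destruct (fchoice (fun i (g : nat -> X) => P i -> forall x, A i x -> exists k, g k = x)) as [g Hg].
  { intros i. destruct (classic (P i)) as [Pi|Pi].
    - destruct (HA i Pi) as [g Hg]. exists g; auto.
    - exists (fun _ => x0). tauto. }
  exists (fun k => g (fP (fst (of_nat k))) (snd (of_nat k))).
  intros x [i [Pi Ax]]. destruct (HfP i Pi) as [a Ha]. destruct (Hg i Pi x Ax) as [b Hb].
  exists (to_nat (a, b)). rewrite cancel_of_to. simpl. subst. auto.
Qed.

Lemma ctbl_union2 {X} (A B : X -> Prop) : ctbl A -> ctbl B -> ctbl (fun x => A x \/ B x).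
Proof.
  intros [fA HA] [fB HB]. exists (fun k => match fst (of_nat k) with 0 => fA (snd (of_nat k)) | _ => fB (snd (of_nat k)) end).
  intros x [Ax|Bx].
  - destruct (HA x Ax) as [b Hb]. exists (to_nat (0, b)). rewrite cancel_of_to. simpl; auto.
  - destruct (HB x Bx) as [b Hb]. exists (to_nat (1, b)). rewrite cancel_of_to. simpl; auto.
Qed.

Lemma ctbl_single {X} (a : X) : ctbl (fun x => x = a).
Proof. exists (fun _ => a). intros x ->. exists 0; auto. Qed.

Lemma ctbl_inlist {X} (l : list X) (x0 : X) : ctbl (fun x => In x l).
Proof. exists (fun k => nth k l x0). intros x Hx. destruct (In_nth l x x0 Hx) as [k [_ Hk]]. eauto. Qed.

Lemma ctbl_nat : ctbl (fun _ : nat => True).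
Proof. exists (fun k => k). intros x _. eauto. Qed.

Fixpoint lenlists {X} (fC : nat -> X) (n : nat) (k : nat) : list X :=
  match n with 0 => [] | S n' => fC (fst (of_nat k)) :: lenlists fC n' (snd (of_nat k)) end.

Lemma ctbl_lists {X} (C : X -> Prop) : ctbl C -> ctbl (fun l : list X => forall x, In x l -> C x).
Proof.
  intros [fC HC].
  assert (H : forall l, (forall x, In x l -> C x) -> exists k, lenlists fC (length l) k = l).
  { induction l as [|a l IH]; intros Hl.
    - exists 0; auto.
    - destruct IH as [k Hk]. { intros x Hx; apply Hl; right; auto. }
      destruct (HC a) as [j Hj]. { apply Hl; left; auto. }
      exists (to_nat (j, k)).
      change (fC (fst (of_nat (to_nat (j,k)))) :: lenlists fC (length l) (snd (of_nat (to_nat (j,k)))) = a :: l).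
      rewrite cancel_of_to. simpl. congruence. }
  exists (fun k => lenlists fC (fst (of_nat k)) (snd (of_nat k))).
  intros l Hl. destruct (H l Hl) as [k Hk]. exists (to_nat (length l, k)).
  rewrite cancel_of_to. simpl. auto.
Qed.

Lemma ctbl_of_cs {X} (A : X -> Prop) (x0 : X) : countable_set X A -> ctbl A.
Proof.
  intros [g Hg]. exists (fun k => epsilon (inhabits x0) (fun y => A y /\ g y = k)).
  intros x Ax. exists (g x).
  assert (E : exists y, A y /\ g y = g x) by eauto.
  destruct (epsilon_spec (inhabits x0) _ E) as [H1 H2]. apply Hg; auto.
Qed.

Lemma cs_of_ctbl {X} (A : X -> Prop) : ctbl A -> countable_set X A.
Proof.
  intros [f Hf]. exists (fun x => epsilon (inhabits 0) (fun k => f k = x)).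
  intros x y Ax Ay E.
  assert (Ex := epsilon_spec (inhabits 0) (fun k => f k = x) (Hf x Ax)).
  assert (Ey := epsilon_spec (inhabits 0) (fun k => f k = y) (Hf y Ay)).
  simpl in *. rewrite E in Ex. congruence.
Qed.

Local Open Scope nat_scope.
Section Lex.
Variables (L : Type) (ltL : L -> L -> Prop).
Hypothesis sloL : strict_linear_order L ltL.

Definition agree (n : nat) (x y : nat -> L) := forall i, i < n -> x i = y i.

Lemma agree_sym n x y : agree n x y -> agree n y x.
Proof. intros H i Hi; symmetry; auto. Qed.
Lemma agree_tr n x y z : agree n x y -> agree n y z -> agree n x z.
Proof. intros H1 H2 i Hi; rewrite H1; auto. Qed.
Lemma agree_le n m x y : m <= n -> agree n x y -> agree m x y.
Proof. intros H1 H2 i Hi; apply H2; lia. Qed.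

Lemma first_diff (x y : nat -> L) : x <> y -> exists n, agree n x y /\ x n <> y n.
Proof.
  intros Hne. apply NNPP; intro N. apply Hne.
  assert (H : forall n, agree n x y).
  { induction n as [|n IH]; intros i Hi; [lia|].
    destruct (Nat.eq_dec i n) as [->|Hin]; [|apply IH; lia].
    apply NNPP; intro E. apply N; eauto. }
  extensionality i. apply (H (S i)). lia.
Qed.

Lemma lex_slo : strict_linear_order (nat -> L) (lex ltL).
Proof.
  split; [|split].
  - intros x [n [_ H]]. exact (g_irr _ _ sloL _ H).
  - intros x y z [n1 [A1 H1]] [n2 [A2 H2]].
    destruct (Nat.lt_total n1 n2) as [Hl|[->|Hl]].
    + exists n1; split. { intros i Hi. rewrite A1 by lia. apply A2; lia. }
      rewrite <- (A2 n1 Hl). exact H1.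
    + exists n2; split. { intros i Hi. rewrite A1 by lia. apply A2; lia. }
      eapply g_tr; eauto.
    + exists n2; split. { intros i Hi. rewrite A1 by lia. apply A2; lia. }
      rewrite (A1 n2 Hl). exact H2.
  - intros x y. destruct (classic (x = y)) as [E|E]; [auto|].
    destruct (first_diff x y E) as [n [An Dn]].
    destruct (g_tri _ _ sloL (x n) (y n)) as [H|[H|H]]; [left|tauto|right;right].
    + exists n; auto.
    + exists n; split; auto. apply agree_sym; auto.
Qed.

Lemma lex_at n (x y : nat -> L) : agree n x y -> ltL (x n) (y n) -> lex ltL x y.
Proof. intros; exists n; auto. Qed.

Lemma le_agree n (x y z : nat -> L) : ~ lex ltL y x -> ~ lex ltL z y -> agree n x z -> agree n y x.
Proof.
  intros H1 H2 A.
  assert (G : forall k, k <= n -> agree k y x).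
  { induction k as [|k IH]; intros Hk i Hi; [lia|].
    destruct (Nat.eq_dec i k) as [->|Hik]; [|apply IH; lia].
    destruct (g_tri _ _ sloL (y k) (x k)) as [H|[H|H]]; auto.
    - exfalso; apply H1. exists k; split; auto. apply IH; lia.
    - exfalso; apply H2. exists k; split.
      + intros j Hj. rewrite <- (A j) by lia. symmetry. apply IH; lia.
      + rewrite <- (A k) by lia. auto. }
  apply G; lia.
Qed.

Lemma lex_nbhd_lo (lo h : nat -> L) : lex ltL lo h -> exists N, forall t, agree N t h -> lex ltL lo t.
Proof.
  intros [n [An Hn]]. exists (S n). intros t At. exists n; split.
  - intros i Hi. rewrite An by auto. symmetry; apply At; lia.
  - rewrite (At n) by lia. auto.
Qed.

Lemma lex_nbhd_hi (h hi : nat -> L) : lex ltL h hi -> exists N, forall t, agree N t h -> lex ltL t hi.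
Proof.
  intros [n [An Hn]]. exists (S n). intros t At. exists n; split.
  - intros i Hi. rewrite <- An by auto. apply At; lia.
  - rewrite (At n) by lia. auto.
Qed.

Section Lub.
Variable supL : (L -> Prop) -> L.
Hypothesis Hsup : forall A, is_lub L ltL A (supL A).
Variable d0 : L.

Definition extl (l : list L) (x : nat -> L) := forall i, i < length l -> x i = nth i l d0.
Definition Sn (A : (nat -> L) -> Prop) (l : list L) (y : L) :=
  exists x, A x /\ extl l x /\ x (length l) = y.
Fixpoint cs (A : (nat -> L) -> Prop) (n : nat) : list L :=
  match n with 0 => [] | S n' => cs A n' ++ [supL (Sn A (cs A n'))] end.
Definition cK A (i : nat) := nth i (cs A (S i)) d0.

Lemma length_cs A n : length (cs A n) = n.
Proof. induction n; simpl; auto. rewrite length_app; simpl; lia. Qed.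

Lemma nth_cs A n i : i < n -> nth i (cs A n) d0 = cK A i.
Proof.
  induction n as [|n IH]; intros Hi; [lia|].
  destruct (Nat.eq_dec i n) as [->|Hin].
  - reflexivity.
  - simpl. rewrite app_nth1 by (rewrite length_cs; lia). apply IH; lia.
Qed.

Lemma cK_S A n : cK A n = supL (Sn A (cs A n)).
Proof. unfold cK; simpl. rewrite app_nth2 by (rewrite length_cs; lia).
  rewrite length_cs, Nat.sub_diag. reflexivity. Qed.

Lemma extl_cs A n x : extl (cs A n) x <-> agree n x (cK A).
Proof. unfold extl, agree. rewrite length_cs. split; intros H i Hi; rewrite H by auto; rewrite nth_cs; auto. Qed.

Lemma lubK A : is_lub (nat -> L) (lex ltL) A (cK A).
Proof.
  split.
  - intros x Ax [n [An Hn]].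
    assert (Sx : Sn A (cs A n) (x n)).
    { exists x; split; [auto|split]. apply extl_cs; apply agree_sym; auto. rewrite length_cs; auto. }
    destruct (Hsup (Sn A (cs A n))) as [Hu _]. rewrite cK_S in Hn. exact (Hu _ Sx Hn).
  - intros u Hu [n [An Hn]].
    rewrite cK_S in Hn.
    destruct (Hsup (Sn A (cs A n))) as [_ Hl].
    destruct (classic (ub L ltL (Sn A (cs A n)) (u n))) as [U|U].
    + exact (Hl _ U Hn).
    + assert (exists y, Sn A (cs A n) y /\ ltL (u n) y) as [y [[x [Ax [Ex Exn]]] Hy]].
      { apply NNPP; intro N. apply U. intros y Sy Huy. apply N; eauto. }
      rewrite length_cs in Exn. subst y.
      apply (Hu x Ax). exists n; split; auto.
      apply extl_cs in Ex. intros i Hi. rewrite An by auto. symmetry; apply Ex; auto.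
Qed.

Lemma compactK : order_compact (nat -> L) (lex ltL).
Proof. apply lub_compact. apply lex_slo. intros A. exists (cK A). apply lubK. Qed.

End Lub.
End Lex.

Module WOAux.
From mathcomp Require Import ssreflect ssrbool eqtype boolp.
Lemma wop (T : Type) : exists R : T -> T -> bool,
  (forall P : T -> Prop, (exists x, P x) -> exists z, P z /\ (forall x, P x -> R z x) /\
      forall z', P z' -> (forall x, P x -> R z' x) -> z' = z).
Proof.
have [R HR] := wochoice.well_ordering_principle (classicType T).
exists R => P [x Px].
have ne : wochoice.nonempty (fun y : classicType T => `[< P y >]).
  by exists x; rewrite unfold_in; apply/asboolP.
have [z [[Pz lz] uz]] := HR _ ne.
exists z; split; first by move: Pz; rewrite unfold_in => /asboolP.
split.
  by move=> y Py; apply: lz; rewrite unfold_in; apply/asboolP.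
move=> z' Pz' lz'; symmetry; apply: uz; split.
  by rewrite unfold_in; apply/asboolP.
by move=> y; rewrite unfold_in => /asboolP Py; apply: lz'.
Qed.
End WOAux.

Lemma wo_exists (T : Type) : exists lt : T -> T -> Prop,
  (forall x, ~ lt x x) /\ (forall x y z, lt x y -> lt y z -> lt x z) /\
  (forall x y, lt x y \/ x = y \/ lt y x) /\
  (forall P : T -> Prop, (exists x, P x) -> exists z, P z /\ forall x, P x -> ~ lt x z).
Proof.
  destruct (WOAux.wop T) as [R HR].
  assert (Hmin2 : forall x y, (R x y = true /\ R x x = true) \/ (R y x = true /\ R y y = true)).
  { intros x y. destruct (HR (fun z => z = x \/ z = y)) as [z [Pz [Lz _]]]; [eauto|].
    destruct Pz; subst; [left|right]; split; apply Lz; auto. }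
  assert (Hrefl : forall x, R x x = true).
  { intros x; destruct (Hmin2 x x) as [[_ H]|[_ H]]; exact H. }
  assert (Hanti : forall x y, R x y = true -> R y x = true -> x = y).
  { intros x y H1 H2. destruct (HR (fun z => z = x \/ z = y)) as [z [Pz [Lz Uz]]]; [eauto|].
    assert (x = z) by (apply Uz; [auto| intros w [->| ->]; auto]).
    assert (y = z) by (apply Uz; [auto| intros w [->| ->]; auto]). congruence. }
  assert (Htrans : forall x y z, R x y = true -> R y z = true -> R x z = true).
  { intros x y z H1 H2. destruct (HR (fun w => w = x \/ w = y \/ w = z)) as [w [Pw [Lw _]]]; [eauto|].
    destruct Pw as [Ew|[Ew|Ew]]; subst w.
    - apply Lw; auto.
    - assert (E : x = y) by (apply Hanti; auto; apply Lw; auto). subst; auto.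
    - assert (E : y = z) by (apply Hanti; auto; apply Lw; auto). subst; auto. }
  exists (fun x y => R x y = true /\ x <> y).
  split; [|split; [|split]].
  - intros x [_ H]; auto.
  - intros x y z [H1 N1] [H2 N2]; split; [eauto|].
    intros ->. apply N1. apply Hanti; auto.
  - intros x y. destruct (classic (x = y)) as [E|E]; [auto|].
    destruct (Hmin2 x y) as [[H _]|[H _]]; [left|right;right]; split; auto.
  - intros P HP. destruct (HR P HP) as [z [Pz [Lz _]]]. exists z; split; auto.
    intros x Px [H N]. apply N. apply Hanti; [exact H| exact (Lz x Px)].
Qed.

Section Main.
Variables (L : Type) (ltL : L -> L -> Prop).
Hypothesis HL : compact_line L ltL.
Hypothesis HU : uncountable L.

Let sloL : strict_linear_order L ltL := proj1 HL.
Let compL : order_compact L ltL := proj2 HL.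

Lemma L_inh : inhabited L.
Proof.
  destruct (classic (inhabited L)) as [H|H]; auto. exfalso. apply HU.
  exists (fun _ => 0). intros x. exfalso; apply H; constructor; auto.
Qed.

Definition supL (A : L -> Prop) : L := epsilon L_inh (fun c => is_lub L ltL A c).
Lemma supL_spec A : is_lub L ltL A (supL A).
Proof.
  unfold supL. apply epsilon_spec. destruct L_inh as [l0].
  apply (compact_lub L ltL sloL l0 compL).
Qed.

Definition m : L := supL (fun _ => False).
Definition M : L := supL (fun _ => True).
Lemma m_min x : ~ ltL x m.
Proof. destruct (supL_spec (fun _ => False)) as [_ H]. apply H. intros y []. Qed.
Lemma M_max x : ~ ltL M x.
Proof. destruct (supL_spec (fun _ => True)) as [H _]. apply H; auto. Qed.
Lemma m_lt_M : ltL m M.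
Proof.
  destruct (g_tri _ _ sloL m M) as [H|[H|H]]; auto.
  - exfalso. apply HU. exists (fun _ => 0). intros x y _.
    assert (forall z, z = m).
    { intros z. apply (g_nlt _ _ sloL); [apply m_min| rewrite H; apply M_max]. }
    rewrite (H0 x), (H0 y); auto.
  - exfalso. exact (M_max _ H).
Qed.
Lemma m_neq_M : m <> M.
Proof. intros E. pose proof m_lt_M as H. rewrite E in H. exact (g_irr _ _ sloL _ H). Qed.

Notation K := (nat -> L).
Notation klt := (lex ltL).
Let kslo : strict_linear_order K klt := lex_slo L ltL sloL.
Lemma k_irr x : ~ klt x x. Proof. apply (g_irr _ _ kslo). Qed.
Lemma compK : order_compact K klt.
Proof. apply (compactK L ltL sloL supL supL_spec m). Qed.

Definition mK : K := fun _ => m.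
Definition MK : K := fun _ => M.
Lemma mK_min x : ~ klt x mK.
Proof. intros [n [_ H]]. exact (m_min _ H). Qed.
Lemma MK_max x : ~ klt MK x.
Proof. intros [n [_ H]]. exact (M_max _ H). Qed.

Definition aa (s : list L) : K := fun i => nth i s m.
Definition bb (s : list L) : K := fun i => nth i s M.
Definition ext (s : list L) (t : K) := forall i, (i < length s)%nat -> t i = nth i s m.

Lemma ext_a s : ext s (aa s). Proof. intros i _; reflexivity. Qed.
Lemma ext_b s : ext s (bb s). Proof. intros i Hi; apply nth_indep; auto. Qed.
Lemma ext_agree s t u : ext s t -> ext s u -> agree L (length s) t u.
Proof. intros H1 H2 i Hi; rewrite H1, H2; auto. Qed.

Lemma a_lt_b s : klt (aa s) (bb s).
Proof.
  exists (length s); split.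
  - apply ext_agree; [apply ext_a|apply ext_b].
  - unfold aa, bb. rewrite !nth_overflow by lia. apply m_lt_M.
Qed.

Lemma a_le s t : ext s t -> ~ klt t (aa s).
Proof.
  intros E [n [An Hn]]. destruct (Nat.lt_ge_cases n (length s)) as [Hl|Hl].
  - rewrite E in Hn by auto. exact (g_irr _ _ sloL _ Hn).
  - unfold aa in Hn. rewrite nth_overflow in Hn by lia. exact (m_min _ Hn).
Qed.

Lemma b_ge s t : ext s t -> ~ klt (bb s) t.
Proof.
  intros E [n [An Hn]]. destruct (Nat.lt_ge_cases n (length s)) as [Hl|Hl].
  - rewrite E in Hn by auto. unfold bb in Hn. rewrite (nth_indep s M m) in Hn by auto.
    exact (g_irr _ _ sloL _ Hn).
  - unfold bb in Hn. rewrite nth_overflow in Hn by lia. exact (M_max _ Hn).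
Qed.

Lemma b_gt s t : ext s t -> t (length s) <> M -> klt t (bb s).
Proof.
  intros E HM. exists (length s); split.
  - apply ext_agree; [auto|apply ext_b].
  - unfold bb. rewrite nth_overflow by lia.
    destruct (g_tri _ _ sloL (t (length s)) M) as [H|[H|H]]; [auto|tauto|exfalso; exact (M_max _ H)].
Qed.

Lemma le_ext s t : ~ klt t (aa s) -> ~ klt (bb s) t -> ext s t.
Proof.
  intros H1 H2 i Hi. pose proof (le_agree L ltL sloL (length s) (aa s) t (bb s) H1 H2) as A.
  rewrite A; auto. apply ext_agree; [apply ext_a|apply ext_b].
Qed.

Lemma ext_prefix s h : ext s h -> s = map h (seq 0 (length s)).
Proof.
  intros E. apply (nth_ext _ _ m m).
  - rewrite length_map, length_seq; auto.
  - intros n Hn.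
    assert (Hn' : (n < length (map h (seq 0 (length s))))%nat) by (rewrite length_map, length_seq; auto).
    rewrite (nth_indep _ m (h 0) Hn').
    rewrite map_nth, seq_nth by auto. simpl. symmetry; apply E; auto.
Qed.

Local Open Scope R_scope.

Definition G (c : K) (t : K) : R := if excluded_middle_informative (klt t c) then 0 else 1.
Definition Fs (s : list L) (t : K) : R := G (aa s) t - G (bb s) t.

Lemma G_1 c t : ~ klt t c -> G c t = 1.
Proof. intros H; unfold G; destruct excluded_middle_informative; tauto. Qed.
Lemma G_0 c t : klt t c -> G c t = 0.
Proof. intros H; unfold G; destruct excluded_middle_informative; tauto. Qed.

Lemma Fs_1 s q : ext s q -> q (length s) <> M -> Fs s q = 1.
Proof. intros E HM. unfold Fs. rewrite G_1 by (apply a_le; auto). rewrite G_0 by (apply b_gt; auto). ring. Qed.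

Lemma incr_lt x l c : incr K klt (x :: l) -> In c l -> klt x c.
Proof.
  revert x. induction l as [|y l IH]; intros x Hi Hc; [destruct Hc|].
  destruct Hi as [Hxy Hi]. destruct Hc as [<-|Hc]; auto.
  apply (g_tr _ _ kslo x y c); auto.
Qed.

Lemma rs_tail_ones c f y l : incr K klt (y :: l) -> ~ klt y c -> rs_tail K (G c) f (y :: l) = 0.
Proof.
  revert y. induction l as [|z l IH]; intros y Hi Hy; [reflexivity|].
  destruct Hi as [Hyz Hi]. simpl.
  assert (Hz : ~ klt z c) by (intro; apply Hy; eapply (g_tr _ _ kslo); eauto).
  change (f z * (G c z - G c y) + rs_tail K (G c) f (z :: l) = 0).
  rewrite IH by auto. rewrite (G_1 c z), (G_1 c y) by auto. ring.
Qed.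

Lemma rs_G c f x l : incr K klt (x :: l) -> In c (x :: l) ->
  f x * G c x + rs_tail K (G c) f (x :: l) = f c.
Proof.
  revert x. induction l as [|y l IH]; intros x Hi Hc.
  - destruct Hc as [<-|[]]. simpl. rewrite G_1 by apply k_irr. ring.
  - destruct Hc as [<-|Hc].
    + rewrite rs_tail_ones; [|auto|apply k_irr]. rewrite G_1 by apply k_irr. ring.
    + assert (Hxc : klt x c) by (eapply incr_lt; eauto).
      destruct Hi as [Hxy Hi].
      change (f x * G c x + (f y * (G c y - G c x) + rs_tail K (G c) f (y :: l)) = f c).
      rewrite G_0 by auto. rewrite <- (IH y Hi Hc). ring.
Qed.

Lemma rs_tail_sub F1 F2 f l : rs_tail K (fun t => F1 t - F2 t) f l = rs_tail K F1 f l - rs_tail K F2 f l.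
Proof.
  induction l as [|x l IH]; [simpl; ring|]. destruct l as [|y l]; [simpl; ring|].
  change (f y * ((F1 y - F2 y) - (F1 x - F2 x)) + rs_tail K (fun t => F1 t - F2 t) f (y :: l) =
          (f y * (F1 y - F1 x) + rs_tail K F1 f (y :: l)) - (f y * (F2 y - F2 x) + rs_tail K F2 f (y :: l))).
  rewrite IH. ring.
Qed.

Lemma rs_Fs s f p : incr K klt p -> In (aa s) p -> In (bb s) p -> rs_sum K (Fs s) f p = f (aa s) - f (bb s).
Proof.
  intros Hi Ha Hb. destruct p as [|x l]; [destruct Ha|].
  unfold rs_sum, Fs. rewrite rs_tail_sub.
  rewrite <- (rs_G (aa s) f x l), <- (rs_G (bb s) f x l) by auto. ring.
Qed.

Lemma stieltjes_Fs s f : stieltjes K klt (Fs s) f (f (aa s) - f (bb s)).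
Proof.
  intros eps Heps.
  assert (Hab := a_lt_b s).
  set (p0 := (if excluded_middle_informative (aa s = mK) then [] else [mK]) ++ [aa s; bb s] ++
             (if excluded_middle_informative (bb s = MK) then [] else [MK])).
  assert (Hp0 : partition K klt p0).
  { assert (Hm : aa s <> mK -> klt mK (aa s)).
    { intros N. destruct (g_tri _ _ kslo mK (aa s)) as [?|[?|?]]; [auto|congruence|exfalso; eapply mK_min; eauto]. }
    assert (HM : bb s <> MK -> klt (bb s) MK).
    { intros N. destruct (g_tri _ _ kslo (bb s) MK) as [?|[?|?]]; [auto|congruence|exfalso; eapply MK_max; eauto]. }
    unfold p0; destruct excluded_middle_informative as [E1|E1]; destruct excluded_middle_informative as [E2|E2];
      simpl; repeat split; auto; intros y; try rewrite E1; try rewrite E2; auto using mK_min, MK_max. }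
  exists p0; split; auto.
  intros p [Hp _] Hsub. rewrite rs_Fs; auto.
  - rewrite Rminus_diag, Rabs_R0; auto.
  - apply Hsub. unfold p0. apply in_or_app; right; left; auto.
  - apply Hsub. unfold p0. apply in_or_app; right; right; left; auto.
Qed.

Lemma G_mono c x y : klt x y -> G c x <= G c y.
Proof.
  intros H. unfold G. destruct excluded_middle_informative; destruct excluded_middle_informative; try lra.
  exfalso. apply n. eapply (g_tr _ _ kslo); eauto.
Qed.
Lemma G_01 c x : 0 <= G c x <= 1.
Proof. unfold G; destruct excluded_middle_informative; lra. Qed.

Lemma var_G c x l : incr K klt (x :: l) -> var_sum K (G c) (x :: l) + G c x <= 1.
Proof.
  revert x. induction l as [|y l IH]; intros x Hi.
  - simpl. pose proof (G_01 c x); lra.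
  - destruct Hi as [Hxy Hi].
    change (Rabs (G c y - G c x) + var_sum K (G c) (y :: l) + G c x <= 1).
    pose proof (G_mono c x y Hxy). rewrite Rabs_pos_eq by lra.
    pose proof (IH y Hi). lra.
Qed.

Lemma var_sub F1 F2 l : var_sum K (fun t => F1 t - F2 t) l <= var_sum K F1 l + var_sum K F2 l.
Proof.
  induction l as [|x l IH]; [simpl; lra|]. destruct l as [|y l]; [simpl; lra|].
  change (Rabs ((F1 y - F2 y) - (F1 x - F2 x)) + var_sum K (fun t => F1 t - F2 t) (y :: l) <=
          (Rabs (F1 y - F1 x) + var_sum K F1 (y :: l)) + (Rabs (F2 y - F2 x) + var_sum K F2 (y :: l))).
  replace ((F1 y - F2 y) - (F1 x - F2 x)) with ((F1 y - F1 x) + - (F2 y - F2 x)) by ring.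
  pose proof (Rabs_triang (F1 y - F1 x) (- (F2 y - F2 x))). rewrite Rabs_Ropp in H. lra.
Qed.

Lemma var_G' c l : incr K klt l -> var_sum K (G c) l <= 1.
Proof. destruct l as [|x l]; [simpl; lra|]. intros H. pose proof (var_G c x l H). pose proof (G_01 c x). lra. Qed.

Lemma NBV_Fs s : NBV K klt (Fs s).
Proof.
  split.
  - intros t eps Heps. destruct (classic (exists u, klt t u)) as [[u0 Hu0]|N].
    + right.
      assert (Hab := a_lt_b s).
      destruct (classic (klt t (aa s))) as [Ha|Ha].
      * exists (aa s); split; auto. intros z Hz1 Hz2. unfold Fs.
        assert (klt z (bb s)) by (apply (g_tr _ _ kslo z (aa s)); auto).
        assert (klt t (bb s)) by (apply (g_tr _ _ kslo t (aa s)); auto).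
        rewrite (G_0 (aa s) z), (G_0 (aa s) t), (G_0 (bb s) z), (G_0 (bb s) t) by auto.
        rewrite Rminus_diag, Rabs_R0; lra.
      * destruct (classic (klt t (bb s))) as [Hb|Hb].
        -- exists (bb s); split; auto. intros z Hz1 Hz2. unfold Fs.
           assert (~ klt z (aa s)) by (intro; apply Ha; eapply (g_tr _ _ kslo); eauto).
           rewrite (G_1 (aa s) z), (G_1 (aa s) t), (G_0 (bb s) z), (G_0 (bb s) t) by auto.
           rewrite Rminus_diag, Rabs_R0; lra.
        -- exists u0; split; auto. intros z Hz1 Hz2. unfold Fs.
           assert (~ klt z (aa s)) by (intro; apply Ha; eapply (g_tr _ _ kslo); eauto).
           assert (~ klt z (bb s)) by (intro; apply Hb; eapply (g_tr _ _ kslo); eauto).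
           rewrite (G_1 (aa s) z), (G_1 (aa s) t), (G_1 (bb s) z), (G_1 (bb s) t) by auto.
           rewrite Rminus_diag, Rabs_R0; lra.
    + left. intros z Hz. apply N; eauto.
  - exists 2. intros l Hl. unfold Fs.
    pose proof (var_sub (G (aa s)) (G (bb s)) l).
    pose proof (var_G' (aa s) l Hl). pose proof (var_G' (bb s) l Hl). lra.
Qed.


Lemma nbhd_agree lo hi h : in_int K klt lo hi h -> exists N, forall t, agree L N t h -> in_int K klt lo hi t.
Proof.
  intros [H1 H2].
  assert (E1 : exists N1, forall t, agree L N1 t h -> match lo with None => True | Some a => klt a t end).
  { destruct lo as [l|]; [|exists 0%nat; auto]. apply (lex_nbhd_lo L ltL l h H1). }
  assert (E2 : exists N2, forall t, agree L N2 t h -> match hi with None => True | Some a => klt t a end).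
  { destruct hi as [l|]; [|exists 0%nat; auto]. apply (lex_nbhd_hi L ltL h l H2). }
  destruct E1 as [N1 E1], E2 as [N2 E2]. exists (N1 + N2)%nat. intros t At. split.
  - apply E1. apply (agree_le L (N1 + N2)); auto; lia.
  - apply E2. apply (agree_le L (N1 + N2)); auto; lia.
Qed.

Lemma c0_v f : continuous_fun K klt f -> c0lim (fun s => f (aa s) - f (bb s)).
Proof.
  intros Hf eps Heps.
  assert (He2 : 0 < eps / 2) by lra.
  destruct (fchoice (fun z (p : option K * option K) => in_int K klt (fst p) (snd p) z /\
             forall y, in_int K klt (fst p) (snd p) y -> Rabs (f y - f z) < eps / 2)) as [LH HLH].
  { intros z. destruct (Hf z (eps/2) He2) as [lo [hi H]]. exists (lo, hi); exact H. }
  destruct (compK K (fun z => in_int K klt (fst (LH z)) (snd (LH z)))) as [zs Hzs].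
  { intros z. apply open_int. }
  { intros z. exists z. apply HLH. }
  set (hs := flat_map (fun z => match snd (LH z) with Some h => [h] | None => [] end) zs).
  assert (Close : forall x y z, in_int K klt (fst (LH z)) (snd (LH z)) x ->
             in_int K klt (fst (LH z)) (snd (LH z)) y -> Rabs (f x - f y) < eps).
  { intros x y z Hx Hy. destruct (HLH z) as [_ Hz]. pose proof (Hz x Hx). pose proof (Hz y Hy).
    replace (f x - f y) with ((f x - f z) - (f y - f z)) by ring.
    pose proof (Rabs_triang (f x - f z) (- (f y - f z))). rewrite Rabs_Ropp in H1.
    unfold Rminus at 1. lra. }
  assert (Claim1 : forall s, eps <= Rabs (f (aa s) - f (bb s)) -> exists h, In h hs /\ ext s h).
  { intros s Hs. destruct (Hzs (aa s)) as [z [Hz Ha]].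
    assert (Hab := a_lt_b s).
    case_eq (snd (LH z)); [intros h Eh| intros Eh].
    - destruct (classic (klt (bb s) h)) as [Hbh|Hbh].
      + exfalso. assert (Hb : in_int K klt (fst (LH z)) (snd (LH z)) (bb s)).
        { destruct Ha as [Ha1 Ha2]. split.
          - destruct (fst (LH z)) as [l|]; auto. apply (g_tr _ _ kslo l (aa s)); auto.
          - rewrite Eh; auto. }
        pose proof (Close _ _ _ Ha Hb). lra.
      + exists h; split.
        * unfold hs. apply in_flat_map. exists z; split; auto. rewrite Eh; left; auto.
        * apply le_ext; auto. destruct Ha as [_ Ha2]. rewrite Eh in Ha2. apply (g_asym _ _ kslo); auto.
    - exfalso. assert (Hb : in_int K klt (fst (LH z)) (snd (LH z)) (bb s)).
      { destruct Ha as [Ha1 Ha2]. split.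
        - destruct (fst (LH z)) as [l|]; auto. apply (g_tr _ _ kslo l (aa s)); auto.
        - rewrite Eh; auto. }
      pose proof (Close _ _ _ Ha Hb). lra. }
  assert (Claim2 : forall h, exists lh, forall s, eps <= Rabs (f (aa s) - f (bb s)) -> ext s h -> In s lh).
  { intros h. destruct (HLH h) as [Hh _]. destruct (nbhd_agree _ _ h Hh) as [N HN].
    exists (map (fun k => map h (seq 0 k)) (seq 0 N)). intros s Hs Es.
    destruct (Nat.lt_ge_cases (length s) N) as [Hl|Hl].
    - apply in_map_iff. exists (length s); split; [symmetry; apply ext_prefix; auto|].
      apply in_seq; lia.
    - exfalso.
      assert (Ha : in_int K klt (fst (LH h)) (snd (LH h)) (aa s)).
      { apply HN. apply (agree_le L (length s)); auto. apply ext_agree; auto. apply ext_a. }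
      assert (Hb : in_int K klt (fst (LH h)) (snd (LH h)) (bb s)).
      { apply HN. apply (agree_le L (length s)); auto. apply ext_agree; auto. apply ext_b. }
      pose proof (Close _ _ _ Ha Hb). lra. }
  destruct (fchoice _ Claim2) as [lh Hlh].
  exists (flat_map lh hs). intros s Hs. destruct (Claim1 s Hs) as [h [Hh Es]].
  apply in_flat_map. exists h; split; auto.
Qed.

Lemma wsn : weak_star_null klt Fs.
Proof.
  intros f Hf. exists (fun s => f (aa s) - f (bb s)). split.
  - intros s. apply stieltjes_Fs.
  - apply c0_v; auto.
Qed.


Definition wlt : L -> L -> Prop := proj1_sig (constructive_indefinite_description _ (wo_exists L)).
Lemma wlt_spec : (forall x, ~ wlt x x) /\ (forall x y z, wlt x y -> wlt y z -> wlt x z) /\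
  (forall x y, wlt x y \/ x = y \/ wlt y x) /\
  (forall P : L -> Prop, (exists x, P x) -> exists z, P z /\ forall x, P x -> ~ wlt x z).
Proof. exact (proj2_sig (constructive_indefinite_description _ (wo_exists L))). Qed.
Lemma wlt_irr x : ~ wlt x x. Proof. apply wlt_spec. Qed.
Lemma wlt_tr x y z : wlt x y -> wlt y z -> wlt x z. Proof. apply wlt_spec. Qed.
Lemma wlt_tri x y : wlt x y \/ x = y \/ wlt y x. Proof. apply wlt_spec. Qed.
Lemma wlt_wf (P : L -> Prop) : (exists x, P x) -> exists z, P z /\ forall x, P x -> ~ wlt x z.
Proof. apply wlt_spec. Qed.
Lemma wlt_asym x y : wlt x y -> ~ wlt y x.
Proof. intros H1 H2. apply (wlt_irr x). eapply wlt_tr; eauto. Qed.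

Definition Wc (a : L) := ctbl (fun y => wlt y a).
Definition Wset (a : L) := Wc a /\ a <> m /\ a <> M.

Lemma Wc_down a b : Wc a -> wlt b a -> Wc b.
Proof. intros H Hb. apply (ctbl_sub _ _ (fun y Hy => wlt_tr _ _ _ Hy Hb) H). Qed.

Lemma L_unctbl : ~ ctbl (fun _ : L => True).
Proof. intros C. apply HU. destruct (cs_of_ctbl _ C) as [g Hg]. exists g. intros x y E; apply Hg; auto. Qed.

Lemma Wc_unctbl : ~ ctbl Wc.
Proof.
  intros C. destruct (classic (exists y, ~ Wc y)) as [E|E].
  - destruct (wlt_wf _ E) as [y0 [Hy0 Hmin]]. apply Hy0.
    apply (ctbl_sub _ _ (fun x Hx => NNPP _ (fun N => Hmin x N Hx)) C).
  - apply L_unctbl. apply (ctbl_sub Wc); auto.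
    intros x _. apply NNPP; intro N. apply E. exists x; exact N.
Qed.

Lemma Wset_unctbl : ~ ctbl Wset.
Proof.
  intros C. apply Wc_unctbl.
  apply (ctbl_sub (fun x => (Wset x \/ x = m) \/ x = M)).
  - intros x Hx. destruct (classic (x = m)); destruct (classic (x = M)); unfold Wset; tauto.
  - apply ctbl_union2; [apply ctbl_union2; [auto|apply ctbl_single]|apply ctbl_single].
Qed.

Lemma bounded (A : L -> Prop) : ctbl A -> (forall x, A x -> Wc x) -> exists b, Wset b /\ forall x, A x -> wlt x b.
Proof.
  intros CA HA.
  set (U := fun y => exists x, A x /\ (wlt y x \/ y = x)).
  assert (CU : ctbl U).
  { apply (ctbl_union A (fun x y => wlt y x \/ y = x) m CA).
    intros i Ai. apply ctbl_union2; [apply HA; auto|apply ctbl_single]. }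
  destruct (classic (exists b, Wset b /\ ~ U b)) as [[b [Wb Ub]]|N].
  - exists b; split; auto. intros x Ax. destruct (wlt_tri x b) as [H|[H|H]]; auto.
    + exfalso; apply Ub; exists x; split; auto.
    + exfalso; apply Ub; exists x; split; auto.
  - exfalso. apply Wset_unctbl. apply (ctbl_sub U); auto.
    intros x Wx. apply NNPP; intro N2; apply N; eauto.
Qed.

Definition Pa (a : L) (y : L) := (wlt y a /\ y <> M) \/ y = m.

Lemma ex_enum a : exists e : nat -> L, Wc a -> (forall k, Pa a (e k)) /\ (forall y, Pa a y -> exists k, e k = y).
Proof.
  destruct (classic (Wc a)) as [W|W]; [|exists (fun _ => m); tauto].
  assert (C : ctbl (Pa a)).
  { apply (ctbl_sub (fun y => (wlt y a) \/ y = m)); [unfold Pa; tauto|].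
    apply ctbl_union2; [auto|apply ctbl_single]. }
  destruct C as [f Hf].
  exists (fun k => if excluded_middle_informative (Pa a (f k)) then f k else m). intros _. split.
  - intros k. destruct excluded_middle_informative; auto. right; auto.
  - intros y Hy. destruct (Hf y Hy) as [k Hk]. exists k. destruct excluded_middle_informative; auto.
    subst; tauto.
Qed.

Definition qq (a : L) : K := proj1_sig (constructive_indefinite_description _ (ex_enum a)).
Lemma qq_spec a : Wc a -> (forall k, Pa a (qq a k)) /\ (forall y, Pa a y -> exists k, qq a k = y).
Proof. exact (proj2_sig (constructive_indefinite_description _ (ex_enum a))). Qed.

Definition Q (t : K) := exists a, Wset a /\ t = qq a.

Lemma qq_noM a k : Wset a -> qq a k <> M.
Proof.
  intros [W _]. destruct (proj1 (qq_spec a W) k) as [[_ H]|H]; auto. rewrite H; apply m_neq_M.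
Qed.

Lemma qq_inj a b : Wset a -> Wset b -> qq a = qq b -> a = b.
Proof.
  assert (G : forall a b, Wset a -> Wset b -> qq a = qq b -> ~ wlt a b).
  { intros x y [Wx [Hxm HxM]] [Wy _] E Hxy.
    destruct (proj2 (qq_spec y Wy) x) as [k Hk]. { left; auto. }
    rewrite <- E in Hk. destruct (proj1 (qq_spec x Wx) k) as [[H _]|H]; rewrite Hk in H.
    - exact (wlt_irr _ H).
    - auto. }
  intros Wa Wb E. destruct (wlt_tri a b) as [H|[H|H]]; auto.
  - exfalso; exact (G a b Wa Wb E H).
  - exfalso; exact (G b a Wb Wa (eq_sym E) H).
Qed.

Lemma fin_or_nodup {X} (A : X -> Prop) N :
  (exists l, NoDup l /\ length l = N /\ forall x, In x l -> A x) \/ (exists l, forall x, A x -> In x l).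
Proof.
  induction N as [|N [[l [Hn [Hl HA]]]|IH]].
  - left. exists []. repeat split; auto. constructor. intros x [].
  - destruct (classic (exists x, A x /\ ~ In x l)) as [[x [Ax Nx]]|E].
    + left. exists (x :: l). split; [constructor; auto|split; [simpl; auto|]].
      intros y [<-|Hy]; auto.
    + right. exists l. intros x Ax. apply NNPP; intro N2; apply E; eauto.
  - right; auto.
Qed.

Lemma pigeon (h : K -> nat) (N : nat) : exists s l, NoDup l /\ length l = N /\
  forall t, In t l -> Q t /\ (h t <= length s)%nat /\ ext s t.
Proof.
  apply NNPP; intro Hno.
  assert (Fin : forall s, exists l, forall t, (Q t /\ (h t <= length s)%nat /\ ext s t) -> In t l).
  { intros s. destruct (fin_or_nodup (fun t => Q t /\ (h t <= length s)%nat /\ ext s t) N) as [[l Hl]|Hr]; auto.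
    exfalso; apply Hno; exists s, l; tauto. }
  destruct (fchoice _ Fin) as [finl Hfinl].
  set (qinv := fun t => epsilon L_inh (fun a => Wset a /\ qq a = t)).
  assert (Hqinv : forall a, Wset a -> qinv (qq a) = a).
  { intros a Wa. unfold qinv. assert (E : exists a', Wset a' /\ qq a' = qq a) by eauto.
    destruct (epsilon_spec L_inh _ E) as [W1 E1]. apply qq_inj; auto. }
  set (C := fun b y => wlt y b \/ y = m).
  set (Sb := fun b a => Wset a /\ exists s, (forall y, In y s -> C b y) /\ (h (qq a) <= length s)%nat /\ ext s (qq a)).
  assert (CS : forall b, Wc b -> ctbl (Sb b)).
  { intros b Wb.
    apply (ctbl_sub (fun a => exists s, (forall y, In y s -> C b y) /\ In a (map qinv (finl s)))).
    - intros a [Wa [s [Hs1 [Hs2 Hs3]]]]. exists s; split; auto.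
      rewrite <- (Hqinv a Wa). apply in_map. apply Hfinl. split; [exists a; auto|auto].
    - apply (ctbl_union _ (fun s a => In a (map qinv (finl s))) m).
      + apply ctbl_lists. apply ctbl_union2; [auto|apply ctbl_single].
      + intros s _. apply ctbl_inlist; exact m. }
  assert (Nx : forall b, exists b', Wset b -> Wset b' /\ wlt b b' /\ forall a, Sb b a -> wlt a b').
  { intros b. destruct (classic (Wset b)) as [Wb|Wb]; [|exists b; tauto].
    destruct (bounded (fun x => x = b \/ Sb b x)) as [b' [Wb' Hb']].
    - apply ctbl_union2; [apply ctbl_single|apply CS; apply Wb].
    - intros x [->|[Wx _]]; [apply Wb|apply Wx].
    - exists b'. intros _. split; auto. }
  destruct (fchoice _ Nx) as [nx Hnx].
  assert (W0 : exists b, Wset b).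
  { apply NNPP; intro N0. apply Wset_unctbl. apply (ctbl_sub (fun x => x = m)); [|apply ctbl_single].
    intros x Wx; exfalso; eauto. }
  destruct W0 as [g0 Wg0].
  set (gam := fix gam n := match n with O => g0 | S n => nx (gam n) end).
  assert (GW : forall n, Wset (gam n)).
  { induction n; simpl; [auto|]. exact (proj1 (Hnx (gam n) IHn)). }
  assert (GS : forall n, wlt (gam n) (gam (S n))).
  { intros n. exact (proj1 (proj2 (Hnx (gam n) (GW n)))). }
  assert (Gmono : forall j k, (j <= k)%nat -> forall y, C (gam j) y -> C (gam k) y).
  { intros j k Hjk. induction Hjk; auto. intros y Hy. destruct (IHHjk y Hy) as [H|H]; [left|right; auto].
    eapply wlt_tr; eauto. }
  destruct (bounded (fun x => exists j, x = gam j)) as [b1 [Wb1 Hb1]].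
  { apply (ctbl_sub (fun y => exists x, True /\ y = gam x)); [intros y [j ->]; eauto|].
    apply ctbl_img. apply ctbl_nat. }
  { intros x [j ->]. apply GW. }
  destruct (wlt_wf (fun x => Wset x /\ forall j, wlt (gam j) x)) as [d [[Wd Hd] Hdmin]].
  { exists b1; split; auto. intros j; apply Hb1; eauto. }
  set (n := h (qq d)). set (s := map (qq d) (seq 0 n)).
  assert (Es : ext s (qq d)).
  { intros i Hi. unfold s in *. rewrite length_map, length_seq in Hi.
    assert (Hi' : (i < length (map (qq d) (seq 0 n)))%nat) by (rewrite length_map, length_seq; auto).
    rewrite (nth_indep _ m (qq d 0) Hi'). rewrite map_nth, seq_nth by auto. reflexivity. }
  assert (Ls : length s = n) by (unfold s; rewrite length_map, length_seq; auto).
  assert (Hs : forall y, In y s -> exists j, C (gam j) y).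
  { intros y Hy. unfold s in Hy. apply in_map_iff in Hy. destruct Hy as [i [<- _]].
    destruct (proj1 (qq_spec d (proj1 Wd)) i) as [[Hlt HM]|Hm]; [|exists 0%nat; right; auto].
    destruct (classic (qq d i = m)) as [Em|Em]; [exists 0%nat; right; auto|].
    assert (Wy : Wset (qq d i)) by (split; [eapply Wc_down; [apply Wd|auto]|auto]).
    destruct (classic (forall j, wlt (gam j) (qq d i))) as [All|NAll].
    - exfalso. exact (Hdmin _ (conj Wy All) Hlt).
    - apply not_all_ex_not in NAll. destruct NAll as [j Hj]. exists (S j). left.
      destruct (wlt_tri (qq d i) (gam j)) as [H|[H|H]]; [eapply wlt_tr; eauto| rewrite H; auto| tauto]. }
  assert (Hbound : exists J, forall y, In y s -> C (gam J) y).
  { clear -Hs Gmono. induction s as [|y s IH]; [exists 0%nat; intros y []|].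
    destruct IH as [J HJ]. { intros z Hz; apply Hs; right; auto. }
    destruct (Hs y (or_introl eq_refl)) as [j Hj].
    exists (Nat.max J j). intros z [<-|Hz].
    - apply (Gmono j); auto; lia.
    - apply (Gmono J); auto; lia. }
  destruct Hbound as [J HJ].
  assert (Sd : Sb (gam J) d).
  { split; auto. exists s; split; auto. split; auto. rewrite Ls; unfold n; lia. }
  pose proof (proj2 (proj2 (Hnx (gam J) (GW J))) d Sd) as H1.
  simpl in H1. exact (wlt_asym _ _ H1 (Hd (S J))).
Qed.


Lemma ext_map (t : K) k : ext (map t (seq 0 k)) t /\ length (map t (seq 0 k)) = k.
Proof.
  split; [|rewrite length_map, length_seq; auto].
  intros i Hi. rewrite length_map, length_seq in Hi.
  assert (Hi' : (i < length (map t (seq 0 k)))%nat) by (rewrite length_map, length_seq; auto).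
  rewrite (nth_indep _ m (t 0%nat) Hi'). rewrite map_nth, seq_nth by auto. reflexivity.
Qed.

Lemma sep_cond (H : K -> Prop) : order_closed K klt H -> separable_set K klt H ->
  countable_set K (fun t => Q t /\ H t /\ ~ right_isolated K klt H t /\ ~ c0lim (fun i => Fs i t)).
Proof.
  intros HC [D [DH [DC Dd]]].
  apply cs_of_ctbl.
  assert (StepA : forall t, Q t -> H t -> ~ right_isolated K klt H t -> forall k, exists d, D d /\ agree L k d t).
  { intros t [a [Wa ->]] Ht NR k.
    destruct (ext_map (qq a) k) as [Es Ls]. set (s := map (qq a) (seq 0 k)) in *.
    assert (Hb : klt (qq a) (bb s)) by (apply b_gt; auto; apply qq_noM; auto).
    unfold right_isolated in NR.
    assert (Nmax : exists s', H s' /\ klt (qq a) s').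
    { apply NNPP; intro N. apply NR. split; auto. left. intros s' Hs' L1. apply N; eauto. }
    assert (Nsucc : forall s', H s' -> klt (qq a) s' -> exists u, H u /\ klt (qq a) u /\ klt u s').
    { intros s' Hs' L1. apply NNPP; intro N. apply NR. split; auto. right. exists s'. auto. }
    destruct (classic (exists s', H s' /\ klt (qq a) s' /\ ~ klt (bb s) s')) as [[s' [Hs' [L1 L2]]]|N].
    - destruct (Nsucc s' Hs' L1) as [u [Hu [U1 U2]]].
      destruct (Dd u Hu (Some (qq a)) (Some (bb s))) as [d [Dd' [D1 D2]]].
      { split; simpl; auto. apply (g_lt_le _ _ kslo u s' (bb s)); auto. }
      simpl in D1, D2. exists d; split; auto. rewrite <- Ls.
      apply (le_agree L ltL sloL (length s) (qq a) d (bb s)).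
      + apply (g_asym _ _ kslo); auto.
      + apply (g_asym _ _ kslo); auto.
      + apply ext_agree; [auto|apply ext_b].
    - exfalso.
      destruct (closed_min K klt kslo compK (fun x => H x /\ ~ klt x (bb s))) as [p [[Hp Hpb] Hpmin]].
      + intros x Hx. destruct (classic (H x)) as [Hx'|Hx'].
        * assert (klt x (bb s)) by (apply NNPP; intro; apply Hx; auto).
          exists None, (Some (bb s)). split; [split; simpl; auto|]. intros y [_ Hy] [_ Hy']. simpl in Hy. auto.
        * destruct (HC x Hx') as [lo [hi [Hin Hsub]]]. exists lo, hi; split; auto.
          intros y Hy [Hy' _]. exact (Hsub y Hy Hy').
      + destruct Nmax as [s' [Hs' L1]]. exists s'. split; auto.
        assert (klt (bb s) s') by (apply NNPP; intro; apply N; eauto).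
        apply (g_asym _ _ kslo); auto.
      + apply NR. split; auto. right. exists p. split; auto. split.
        * apply (g_lt_le _ _ kslo (qq a) (bb s) p); auto.
        * intros [u [Hu [U1 U2]]]. apply (Hpmin u); auto. split; auto.
          assert (klt (bb s) u) by (apply NNPP; intro; apply N; eauto).
          apply (g_asym _ _ kslo); auto. }
  set (Cd := fun y => exists d, D d /\ exists k, d k = y).
  assert (CCd : ctbl Cd).
  { apply (ctbl_union D (fun d y => exists k, d k = y) m).
    - apply (ctbl_of_cs D mK DC).
    - intros d _. apply (ctbl_sub (fun y => exists x, True /\ y = d x)); [intros y [k <-]; eauto|].
      apply ctbl_img, ctbl_nat. }
  destruct (bounded (fun y => Cd y /\ Wset y)) as [be [Wbe Hbe]].
  { apply (ctbl_sub Cd); [tauto|auto]. }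
  { intros x [_ [Wx _]]; auto. }
  apply (ctbl_sub (fun t => exists a, (wlt a be \/ a = be) /\ t = qq a)).
  - intros t [Qt [Ht [NR _]]]. destruct Qt as [a [Wa Ea]]. exists a; split; auto.
    destruct (wlt_tri a be) as [E|[E|E]]; auto. exfalso.
    destruct (proj2 (qq_spec a (proj1 Wa)) be) as [k Hk]. { left; split; auto. apply Wbe. }
    destruct (StepA t (ex_intro _ a (conj Wa Ea)) Ht NR (S k)) as [d [Dd' Ad]].
    apply (wlt_irr be). apply Hbe. split; auto. exists d; split; auto. exists k.
    rewrite Ad by lia. rewrite Ea; auto.
  - apply ctbl_img. apply ctbl_union2; [apply Wbe|apply ctbl_single].
Qed.

Lemma sum_lb (g : K -> R) (c : R) (l : list K) : (forall t, In t l -> c <= g t) ->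
  INR (length l) * c <= fold_right Rplus 0 (map g l).
Proof.
  induction l as [|x l IH]; intros Hl; simpl; [lra|].
  pose proof (IH (fun t Ht => Hl t (or_intror Ht))). pose proof (Hl x (or_introl eq_refl)).
  destruct (length l); simpl in *; lra.
Qed.

Lemma maxlen_ge (s : list L) (l : list (list L)) : In s l ->
  (length s <= fold_right (fun s acc => Nat.max (length s) acc) 0 l)%nat.
Proof. induction l as [|x l IH]; simpl; [tauto|]. intros [<-|H]; [lia|]. specialize (IH H). lia. Qed.

Lemma not_c0l1 : ~ type_c0l1 Fs Q.
Proof.
  intros [a [b [Hdec [Ha [M0 HM]]]]].
  assert (E : forall t, exists El : list (list L), Q t -> forall i, / 2 <= Rabs (a i t) -> In i El).
  { intros t. destruct (classic (Q t)) as [Qt|Qt]; [|exists []; tauto].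
    destruct (Ha t Qt (/2)) as [El HEl]; [lra|]. exists El; auto. }
  destruct (fchoice _ E) as [El HEl].
  set (h := fun t => S (fold_right (fun s acc => Nat.max (length s) acc) 0%nat (El t))).
  destruct (INR_unbounded (2 * M0)) as [N HN].
  destruct (pigeon h N) as [s [l [ND [Ln Hl]]]].
  assert (Hb : forall t, In t l -> / 2 <= Rabs (b s t)).
  { intros t Ht. destruct (Hl t Ht) as [Qt [Hh Es]].
    assert (Na : Rabs (a s t) < / 2).
    { apply Rnot_le_lt. intro Hle. pose proof (HEl t Qt s Hle) as Hin.
      pose proof (maxlen_ge s (El t) Hin). unfold h in Hh. lia. }
    assert (F1 : Fs s t = 1).
    { apply Fs_1; auto. destruct Qt as [al [Wal ->]]. apply qq_noM; auto. }
    pose proof (Hdec s t Qt) as D. rewrite F1 in D.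
    replace (b s t) with (1 - a s t) by lra.
    pose proof (Rabs_triang_inv 1 (a s t)). rewrite Rabs_R1 in H. lra. }
  pose proof (HM s l ND (fun t Ht => proj1 (Hl t Ht))) as HM'.
  pose proof (sum_lb (fun t => Rabs (b s t)) (/2) l Hb). rewrite Ln in H. lra.
Qed.

Lemma main_in : ~ separably_determined K klt.
Proof.
  intros SD. apply not_c0l1. apply SD.
  - apply NBV_Fs.
  - apply wsn.
  - apply sep_cond.
Qed.
End Main.

Theorem theorem4p6 (L : Type) (ltL : L -> L -> Prop) :
  compact_line L ltL -> uncountable L ->
  ~ separably_determined (nat -> L) (lex ltL).
Proof.
  intros HL HU. exact (main_in L ltL HL HU).
Qed.
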